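(* Let $X$ be an absolutely continuous real random variable, symmetric and unimodal about $0$, with cdf $F$, and let $\beta\in(0,1]$. Define $U(t)=F(t+\lambda_t^\beta)-F(t)$ and $V(t)=F(t)-F(t-\lambda_t^\beta)$. Then for every $t\in\mathbb{R}$: (a) if $t\ge0$ then $U(t)\le\beta/2\le V(t)$; (b) if $t\le0$ then $V(t)\le\beta/2\le U(t)$.
   Context: $\lambda_t^\beta=\inf\{\lambda>0: F(t+\lambda)-F(t-\lambda)\ge\beta\}$. Symmetric and unimodal about $0$ means $X$ has a density $g$ with $g(-s)=g(s)$ which is nonincreasing on $[0,\infty)$. *)

(* Defs.v *)
From HB Require Import structures.
From mathcomp Require Import all_boot all_order all_algebra.
From mathcomp Require Import all_classical all_reals all_analysis.
Set Implicit Arguments. Unset Strict Implicit. Unset Printing Implicit Defensive.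
Import Order.TTheory GRing.Theory Num.Theory.
Local Open Scope classical_set_scope.
Local Open Scope ring_scope.

Definition rcdf d (T : measurableType d) (R : realType) (P : probability T R)
  (X : {RV P >-> R}) (t : R) : R := fine (cdf X t).

Definition has_density d (T : measurableType d) (R : realType)
  (P : probability T R) (X : {RV P >-> R}) (g : R -> R) : Prop :=
  measurable_fun setT g /\ (forall x, 0 <= g x) /\
  forall A : set R, measurable A ->
    distribution P X A = (\int[lebesgue_measure]_(x in A) (g x)%:E)%E.

Definition symmetric_unimodal (R : realType) (g : R -> R) : Prop :=
  (forall s, g (- s) = g s) /\
  (forall s s', 0 <= s -> s <= s' -> g s' <= g s).

(* lambda_t^beta = inf { lambda > 0 : F(t+lambda) - F(t-lambda) >= beta },
   taken in the extended reals (it is +oo when the set is empty, e.g. beta = 1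
   and X has unbounded support). *)
Definition lambda_beta (R : realType) (F : R -> R) (beta t : R) : \bar R :=
  ereal_inf [set (l%:E)%E | l in [set l : R | 0 < l /\ beta <= F (t + l) - F (t - l)]].

Definition ext_cdf (R : realType) (F : R -> R) (x : \bar R) : R :=
  match x with
  | EFin r => F r
  | +oo%E => 1
  | -oo%E => 0
  end.

(* Main.v *)
Require Import Defs.
From HB Require Import structures.
From mathcomp Require Import all_boot all_order all_algebra.
From mathcomp Require Import all_classical all_reals all_analysis.
From mathcomp Require Import measurable_realfun ring lra.
Import Order.TTheory GRing.Theory Num.Theory.
Import numFieldNormedType.Exports.
Local Open Scope classical_set_scope.
Local Open Scope ring_scope.

Section Refl.
Context (R : realType).
Local Notation mu := (@lebesgue_measure R).

Lemma mrefl (c : R) : measurable_fun setT (fun x : R => c - x).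
Proof. by apply: measurable_funB. Qed.

Definition refl (c : R) : R -> measurableTypeR R := fun x => c - x.

Lemma mrefl' (c : R) : measurable_fun setT (refl c).
Proof. exact: mrefl. Qed.
Hint Resolve mrefl' : core.

Lemma push_refl (c : R) A : measurable A ->
  pushforward mu (refl c) A = mu A.
Proof.
move=> mA; apply/esym/lebesgue_measure_unique => //=.
  exact: mrefl'.
move=> _ _ [[a b]] _ <-.
rewrite /pushforward.
have -> : (refl c) @^-1` `]a, b]%classic = `[c - b, c - a[%classic.
  apply/seteqP; split => x /=; rewrite /refl !in_itv /= => /andP[h1 h2]; apply/andP; split; lra.
have := lebesgue_measure_itv `]a, b]; rewrite /= => ->.
have := lebesgue_measure_itv `[c - b, c - a[; rewrite /= => ->.
rewrite !lte_fin; have -> : (c - b < c - a) = (a < b) by apply/idP/idP => h; lra.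
case: ltP => // _; rewrite -!EFinD; congr (_%:E); ring.
Qed.

End Refl.
Arguments refl {R}.
Arguments mrefl {R}.
Arguments mrefl' {R}.
Arguments push_refl {R}.

Section S.
Context d (T : measurableType d) (R : realType) (P : probability T R)
  (X : {RV P >-> R}) (g : R -> R).
Hypothesis hd : has_density X g.
Hypothesis hsu : symmetric_unimodal g.
Local Notation F := (rcdf X).
Local Notation dist := (distribution P X).
Local Notation mu := (@lebesgue_measure R).

Lemma dist_fin A : measurable A -> dist A \is a fin_num.
Proof. move=> mA; exact: fin_num_measure. Qed.

Lemma Fsub a b : a <= b -> F b - F a = fine (dist `]a, b]).
Proof.
move=> ab; rewrite /rcdf /cdf.
have -> : `]-oo, b]%classic = `]-oo, a]%classic `|` `]a, b]%classic.
  apply/seteqP; split => x /=; rewrite !in_itv /=.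
    move=> xb; case: (leP x a) => xa; [by left|by right; rewrite xb andbT].
  by case => [xa|/andP[_ ->]] //; apply: le_trans xa ab.
rewrite measureU //=; last first.
  apply/seteqP; split => x //= [] ; rewrite !in_itv /= => xa /andP[ax _].
  by move: (lt_le_trans ax xa); rewrite ltxx.
rewrite fineD ?dist_fin //; ring.
Qed.

Lemma F_le a b : a <= b -> F a <= F b.
Proof.
move=> ab; rewrite -subr_ge0 Fsub //; apply: fine_ge0; exact: measure_ge0.
Qed.

Lemma g_abs x : g `|x| = g x.
Proof. case: hsu => hs _; case: (ger0P x) => // _; by rewrite hs. Qed.

Lemma g_mono x y : `|x| <= `|y| -> g y <= g x.
Proof.
move=> h; rewrite -g_abs -(g_abs x); case: hsu => _ hm; apply: hm => //.
Qed.

Lemma g_le0 x : g x <= g 0.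
Proof. apply: g_mono; by rewrite normr0. Qed.

Lemma dist_int A : measurable A -> dist A = (\int[mu]_(x in A) (g x)%:E)%E.
Proof. by case: hd => _ [_ h] /h. Qed.

Lemma dist_le a b : a <= b -> fine (dist `]a, b]) <= g 0 * (b - a).
Proof.
move=> ab; rewrite -lee_fin fineK ?dist_fin // dist_int //.
apply: (@le_trans _ _ (\int[mu]_(x in `]a, b]) (cst (g 0)%:E) x)%E).
  apply: ge0_le_integral => //.
  - by move=> x _; rewrite lee_fin; case: hd => _ [].
  - apply/measurable_realfun.measurable_EFinP; apply: measurable_funS (proj1 hd) => //.
  - by move=> x _; rewrite lee_fin g_le0.
rewrite integral_cst //. have := lebesgue_measure_itv `]a, b]. rewrite /= lte_fin => ->.
case: ltP => h; first by rewrite -EFinD.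
have -> : b = a by apply/eqP; rewrite eq_le ab h.
by rewrite subrr mulr0 mule0.
Qed.

Lemma F_lip a b : a <= b -> F b - F a <= g 0 * (b - a).
Proof. by move=> ab; rewrite Fsub // dist_le. Qed.


Lemma refl_le (c : R) (A B : set R) : measurable A -> measurable B ->
  (forall x, A (c - x) -> B x /\ g (c - x) <= g x) -> (dist A <= dist B)%E.
Proof.
move=> mA mB h.
have mg : measurable_fun setT (fun x => (g x)%:E).
  by apply/measurable_EFinP; case: hd.
have g0 : forall x, 0 <= g x by case: hd => _ [].
have mpre : measurable (refl c @^-1` A).
  by rewrite -(setTI (_ @^-1` _)); exact: (mrefl' c).
rewrite dist_int // (eq_measure_integral (pushforward mu (refl c))); last first.
  by move=> ? Y mY _; symmetry; exact: push_refl.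
2: exact: mrefl'.
move=> mf; rewrite (ge0_integral_pushforward mf) //; last 2 first.
- exact: measurable_funS mg.
- by move=> y _; rewrite lee_fin.
apply: (@le_trans _ _ (\int[mu]_(x in refl c @^-1` A) (g x)%:E)%E).
  apply: ge0_le_integral => //.
  - by move=> x _; rewrite lee_fin.
  - apply: measurable_funS (measurableT_comp mg (mrefl' c)) => //.
  - exact: measurable_funS mg.
  - by move=> x Ax; rewrite lee_fin /=; case: (h x Ax).
rewrite -dist_int //; apply: le_measure; rewrite ?inE //.
by move=> x Ax; case: (h x Ax).
Qed.

Lemma g0_ge0 : 0 <= g 0. Proof. by case: hd => _ []. Qed.

Lemma pt_le a b : a <= b -> fine (dist `[a, b]) <= F b - F a.
Proof.
move=> ab; apply/ler_addgt0Pr => e e0.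
have g0p : 0 < g 0 + 1 by have := g0_ge0; lra.
set e' := e / (g 0 + 1).
have e'0 : 0 < e' by rewrite /e' divr_gt0.
have he : g 0 * e' <= e.
  rewrite /e' mulrA ler_pdivrMr //; have := g0_ge0; nra.
have h1 : fine (dist `[a, b]) <= fine (dist `]a - e', b]).
  apply: fine_le; rewrite ?dist_fin //.
  apply: le_measure; rewrite ?inE //= => x /=; rewrite !in_itv /= => /andP[h2 ->].
  rewrite andbT; lra.
rewrite -Fsub in h1; last lra.
have := @F_lip (a - e') a; rewrite (_ : a - (a - e') = e'); last ring.
move=> /(_ ltac:(lra)) h2; lra.
Qed.

Lemma cmp_pos t l : 0 <= t -> 0 <= l -> F (t + l) - F t <= F t - F (t - l).
Proof.
move=> t0 l0; rewrite Fsub; last lra.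
apply: (@le_trans _ _ (fine (dist `[t - l, t]))); last by apply: pt_le; lra.
apply: fine_le; rewrite ?dist_fin //.
apply: (refl_le (t + t)) => // x; rewrite /= !in_itv /= => /andP[h1 h2].
split; first by apply/andP; split; lra.
apply: g_mono; rewrite (ger0_norm (_ : 0 <= t + t - x)); last lra.
rewrite ler_norml; apply/andP; split; lra.
Qed.

Lemma cmp_neg t l : t <= 0 -> 0 <= l -> F t - F (t - l) <= F (t + l) - F t.
Proof.
move=> t0 l0; rewrite Fsub; last lra.
apply: (@le_trans _ _ (fine (dist `[t, t + l]))); last by apply: pt_le; lra.
apply: fine_le; rewrite ?dist_fin //.
apply: (refl_le (t + t)) => // x; rewrite /= !in_itv /= => /andP[h1 h2].
split; first by apply/andP; split; lra.
apply: g_mono; rewrite (ler0_norm (_ : t + t - x <= 0)); last lra.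
rewrite ler_norml; apply/andP; split; lra.
Qed.

Lemma tails e : 0 < e -> exists L, forall l, L <= l -> 1 - e < F l /\ F (- l) < e.
Proof.
move=> e0.
have h1 : (fine \o cdf X) @ +oo%R --> (1:R).
  by move/fine_cvgP: (cvg_cdfy1 X) => [].
have h2 : (fine \o cdf X) @ -oo%R --> (0:R).
  by move/fine_cvgP: (cvg_cdfNy0 X) => [].
move/cvgrPdist_lt: h1 => /(_ e e0) [M1 [_ HM1]].
move/cvgrPdist_lt: h2 => /(_ e e0) [M2 [_ HM2]].
exists (Num.max (M1 + 1) (- M2 + 1)) => l; rewrite ge_max => /andP[l1 l2].
have := HM1 l ltac:(lra); have := HM2 (- l) ltac:(lra).
rewrite /= /rcdf !ltr_norml => /andP[a1 a2] /andP[b1 b2]; split; lra.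
Qed.

Lemma F_ge0 x : 0 <= F x.
Proof. by apply: fine_ge0; exact: cdf_ge0. Qed.

Lemma F_le1 x : F x <= 1.
Proof.
rewrite /rcdf; have := cdf_le1 X x; have : cdf X x \is a fin_num by apply: dist_fin.
by case: (cdf X x).
Qed.

Lemma F0 : F 0 = 1 / 2.
Proof.
have hs : forall l, 0 <= l -> F l + F (- l) = 2 * F 0.
  move=> l l0; have := cmp_pos 0 l (lexx 0) l0; have := cmp_neg 0 l (lexx 0) l0.
  rewrite !add0r; lra.
suff : `|2 * F 0 - 1| <= 0 by rewrite normr_le0 subr_eq0 => /eqP h; lra.
apply/ler_addgt0Pr => e e0; rewrite add0r.
have [L HL] := tails e e0.
have := HL (Num.max L 0); rewrite le_max lexx => /(_ isT) [h1 h2].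
have := hs (Num.max L 0); rewrite le_max lexx orbT => /(_ isT) h3.
have := F_ge0 (- Num.max L 0); have := F_le1 (Num.max L 0).
rewrite ler_norml; move=> h4 h5; apply/andP; split; lra.
Qed.

Lemma Glip t a b : a <= b ->
  (F (t + b) - F (t - b)) - (F (t + a) - F (t - a)) <= 2 * g 0 * (b - a).
Proof.
move=> ab.
have h1 := F_lip (t + a) (t + b).
have h2 := F_lip (t - b) (t - a).
have e1 : (t + b) - (t + a) = b - a by ring.
have e2 : (t - a) - (t - b) = b - a by ring.
have := h1 ltac:(lra); have := h2 ltac:(lra); rewrite e1 e2; lra.
Qed.

Lemma Gneg t a : a <= 0 -> F (t + a) - F (t - a) <= 0.
Proof. by move=> a0; rewrite subr_le0; apply: F_le; lra. Qed.

Lemma main_sec beta : 0 < beta <= 1 -> forall t : R,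
  let U := ext_cdf F (t%:E + lambda_beta F beta t)%E - F t in
  let V := F t - ext_cdf F (t%:E - lambda_beta F beta t)%E in
    (0 <= t -> U <= beta / 2 <= V) /\ (t <= 0 -> V <= beta / 2 <= U).
Proof.
move=> /andP[b0 b1] t U V.
set S := [set l : R | 0 < l /\ beta <= F (t + l) - F (t - l)].
have lamE : lambda_beta F beta t = ereal_inf [set (l%:E)%E | l in S] by [].
have lb : forall l, S l -> (lambda_beta F beta t <= l%:E)%E.
  by move=> l Sl; rewrite lamE; apply: ereal_inf_lbound; exists l.
have lb0 : (0 <= lambda_beta F beta t)%E.
  rewrite lamE; apply: le_ereal_inf_tmp => _ [l [l0 _] <-]; by rewrite lee_fin ltW.
have hF0 := F0.
rewrite /U /V; clear U V.
case E: (lambda_beta F beta t) => [ell| |]; last by rewrite E in lb0.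
2:{
  have nS : forall l, 0 < l -> F (t + l) - F (t - l) < beta.
    move=> l l0; rewrite ltNge; apply/negP => h.
    by have := lb l (conj l0 h); rewrite E.
  have b1' : beta = 1.
    apply/eqP; rewrite eq_le b1 /=; rewrite leNgt; apply/negP => hb.
    have e0 : 0 < (1 - beta) / 2 by rewrite divr_gt0 // subr_gt0.
    have [L HL] := tails ((1 - beta) / 2) e0.
    set l := `|L| + `|t| + 1.
    have hL : L <= `|L| := ler_norm L.
    have ht1 : - t <= `|t| by rewrite -normrN ler_norm.
    have ht2 : t <= `|t| := ler_norm t.
    have := HL (t + l) ltac:(rewrite /l; lra).
    have := HL (l - t) ltac:(rewrite /l; lra).
    rewrite (_ : - (l - t) = t - l); last ring.
    have := nS l ltac:(rewrite /l; have := normr_ge0 L; have := normr_ge0 t; lra).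
    move=> h1 [_ h2] [h3 _]; lra.
  rewrite b1' /=.
  split => ht.
  - have := F_le 0 t ht; rewrite hF0; lra.
  - have := F_le t 0 ht; rewrite hF0; lra. }
rewrite /=.
have lbl : forall l, S l -> ell <= l by move=> l /lb; rewrite E lee_fin.
have adh : forall e, 0 < e -> exists l, S l /\ l < ell + e.
  move=> e e0; have : (lambda_beta F beta t < (ell + e)%:E)%E.
    by rewrite E lte_fin ltrDl.
  by rewrite lamE => /ereal_inf_lt [_ [l Sl <-]]; rewrite lte_fin => h; exists l.
have g0 := g0_ge0.
have Gge : beta <= F (t + ell) - F (t - ell).
  rewrite leNgt; apply/negP => hlt.
  have p0 : 0 < 2 * g 0 + 1 by lra.
  set e := (beta - (F (t + ell) - F (t - ell))) / (2 * g 0 + 1).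
  have e0 : 0 < e by rewrite divr_gt0 // subr_gt0.
  have eE : e * (2 * g 0 + 1) = beta - (F (t + ell) - F (t - ell)).
    by rewrite /e divfK // gt_eqF.
  have [l [Sl ll]] := adh e e0.
  have hl := lbl l Sl.
  have := Glip t ell l hl; case: Sl => _ Sl.
  have : 2 * g 0 * (l - ell) <= 2 * g 0 * e by apply: ler_wpM2l; lra.
  nra.
have lpos : 0 < ell.
  rewrite ltNge; apply/negP => h; have := Gneg t ell h; lra.
have Gle : F (t + ell) - F (t - ell) <= beta.
  rewrite leNgt; apply/negP => hgt.
  have p0 : 0 < 2 * g 0 + 1 by lra.
  set e := Num.min (ell / 2) ((F (t + ell) - F (t - ell) - beta) / (2 * g 0 + 1)).
  have e0 : 0 < e.
    by rewrite lt_min; apply/andP; split; apply: divr_gt0; lra.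
  have e1 : e <= ell / 2 by rewrite ge_min lexx.
  have e2 : e * (2 * g 0 + 1) <= F (t + ell) - F (t - ell) - beta.
    by rewrite -ler_pdivlMr // ge_min lexx orbT.
  have Sl : S (ell - e).
    split; first lra.
    have := Glip t (ell - e) ell.
    rewrite (_ : ell - (ell - e) = e); last ring.
    move=> /(_ ltac:(lra)) h.
    have : 0 <= 2 * g 0 * e by apply: mulr_ge0; lra.
    nra.
  have := lbl _ Sl; lra.
have Geq : F (t + ell) - F (t - ell) = beta by apply/eqP; rewrite eq_le Gle Gge.
split => ht.
- have := cmp_pos t ell ht (ltW lpos); lra.
- have := cmp_neg t ell ht (ltW lpos); lra.
Qed.

End S.

Theorem mainTheorem10 (d : measure_display) (T : measurableType d)
  (R : realType) (P : probability T R) (X : {RV P >-> R}) (g : R -> R)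
  (beta : R) :
  has_density X g -> symmetric_unimodal g ->
  0 < beta <= 1 ->
  let F := rcdf X in
  let U := fun t => ext_cdf F (t%:E + lambda_beta F beta t)%E - F t in
  let V := fun t => F t - ext_cdf F (t%:E - lambda_beta F beta t)%E in
  forall t : R,
    (0 <= t -> U t <= beta / 2 <= V t) /\
    (t <= 0 -> V t <= beta / 2 <= U t).
Proof.
move=> hd hsu hb F U V t.
exact: (@main_sec _ _ _ _ _ _ hd hsu _ hb t).
Qed.
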